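(* Let $\mathcal N$ be an $(M,N,q)$-Schreier norming set. Let $k\ge2$ and let $a_1,\dots,a_{k-1}$ be non-negative integers, not all zero. If $x_1^*,\dots,x_t^*\in\mathcal N$ is an $S_{\sum_{\ell<k}a_\ell n_{2\ell}}$-admissible block sequence and $(\beta_i)_{i=1}^t\in Ba(\ell_q)$, then $$\frac{1}{\prod_{\ell<k}m_{2\ell}^{a_\ell}}\sum_{i=1}^t\beta_ix_i^*\in\mathcal N.$$
   Context: Notation. $c_{00}$ is the space of finitely supported real sequences, $(e_i)_{i\ge1}$ its unit vector basis and $(e_i^* )_{i\ge1}$ the biorthogonal functionals. For a functional $x^*=\sum_i a_ie_i^*$, ${\rm supp}\,x^*=\{i:a_i\neq0\}$. For finite $E,F\subset\mathbb N$, $E<F$ means $\max E<\min F$. $Ba(\ell_q)$ is the closed unit ball of $\ell_q$ (applied to finite scalar sequences). For an interval $E\subset\mathbb N$, $Ex^*$ is the restriction of $x^*$ to the coordinates in $E$. Schreier families: $S_0=\{\{n\}:n\in\mathbb N\}\cup\{\emptyset\}$ and $S_{n+1}=\{\bigcup_{i=1}^mF_i: m\in\mathbb N,\ F_i\in S_n,\ m\le\min F_1,\ F_1<\dots<F_m\}\cup\{\emptyset\}$. Successive finite sets $E_1<\dots<E_k$ are $S_n$-admissible if $\{\min E_1,\dots,\min E_k\}\in S_n$; a finite block sequence $x_1^*,\dots,x_k^*$ (${\rm supp}\,x_1^*<\dots<{\rm supp}\,x_k^*$) is $S_n$-admissible if $({\rm supp}\,x_i^* )_{i=1}^k$ is.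 Sequences. $M=(m_i)$, $N=(n_i)$ are increasing sequences of positive integers such that (i) $m_1>3$, $m_2=m_1^5$, $m_{2j+1}=m_{2j}^5$ for $j\ge1$, and there is an increasing sequence $(s_i)$ of positive integers with $m_{2j}=\prod_{i=1}^{j-1}m_{2i}^{s_i}$ for $j\ge2$; (ii) defining for $j\ge2$ $f_j=\max\{\rho n_1+\sum_{1\le i<j}\rho_in_{2i}:\ \rho,\rho_i\in\mathbb N\cup\{0\},\ m_1^{\rho}\prod_{1\le i<j}m_{2i}^{\rho_i}<m_{2j}\}$, one has $4f_j<n_{2j}$ for all $j\ge2$, and $5n_1<n_2$. Norming sets. A set $\mathcal N\subset{\rm span}\{e_i^*\}$ is norming if it contains every $e_n^*$, satisfies $|x^*(e_n)|\le1$ for all $x^*\in\mathcal N$, $n\in\mathbb N$, is symmetric, and $Ex^*\in\mathcal N$ for all $x^*\in\mathcal N$ and intervals $E\subset\mathbb N$. $(M,N,q)$-Schreier. Let $1<p,q<\infty$, $1/p+1/q=1$. For $k\ge1$ let $\mathcal N_k$ be the set of all $\frac1{m_{2k}}\sum_{i=1}^d\gamma_ix_i^*$ where $d\in\mathbb N$, $(\gamma_i)_{i=1}^d\in Ba(\ell_q)$, and $x_1^*,\dots,x_d^*\in\mathcal N$ is an $S_{n_{2k}}$-admissible block sequence. Let $\mathcal N^q_\infty$ be the union over $k\ge0$ of the sets of all $\frac1{m_{2k+1}}\sum_{i=1}^d\gamma_iEx_i^*$ where $(\gamma_i)\in 2^{1/p}Ba(\ell_q)$, $E$ is an interval of $\mathbb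 N$, $x_1^*,\dots,x_d^*$ is an $S_{n_{2k+1}}$-admissible block sequence with $x_i^*\in\mathcal N_{j_i}$ and $j_1,\dots,j_d$ pairwise distinct. A norming set $\mathcal N$ is $(M,N,q)$-Schreier if $\mathcal N_j\subset\mathcal N$ for all $j\ge1$ and $\mathcal N\subset\bigcup_{j\ge1}\mathcal N_j\cup\mathcal N^q_\infty\cup\{\pm e_n^*:n\in\mathbb N\}$. *)

(* Defs.v *)
From Stdlib Require Import Reals Lra Lia List Sorted Arith.
Import ListNotations.
Open Scope R_scope.

(** Functionals in span{e_i^*}: functions nat -> R, coordinates indexed by
    n >= 1 (coordinate 0 is unused and required to be 0). *)
Definition functional := nat -> R.

Definition fin_supp (x : functional) : Prop :=
  x 0%nat = 0 /\ exists n : nat, forall i, (n < i)%nat -> x i = 0.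

Definition ecoord (n : nat) : functional := fun i => if Nat.eqb i n then 1 else 0.

Definition restrict (a b : nat) (x : functional) : functional :=
  fun i => if andb (Nat.leb a i) (Nat.leb i b) then x i else 0.

(** finite sums / products over naturals, i ranging over lo, ..., lo+len-1 *)
Definition nsum (lo len : nat) (f : nat -> nat) : nat :=
  fold_right Nat.add 0%nat (map f (seq lo len)).
Definition nprod (lo len : nat) (f : nat -> nat) : nat :=
  fold_right Nat.mul 1%nat (map f (seq lo len)).

(** Schreier families, finite subsets of N = {1,2,...} represented by
    strictly increasing lists. *)
Fixpoint Schreier (n : nat) (L : list nat) : Prop :=
  match n with
  | O => L = [] \/ exists a, (1 <= a)%nat /\ L = [a]
  | S n' => L = [] \/
      (Sorted lt L /\
       exists Fs : list (list nat),
         Forall (fun F => F <> [] /\ Schreier n' F) Fs /\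
         concat Fs = L /\ (length Fs <= hd 0%nat L)%nat)
  end.

(** |g|^q, with |0|^q = 0 *)
Definition powabs (q g : R) : R :=
  if Req_EM_T g 0 then 0 else Rpower (Rabs g) q.

Definition Ba (q : R) (gs : list R) : Prop :=
  fold_right Rplus 0 (map (powabs q) gs) <= 1.

Definition cBa (c q : R) (gs : list R) : Prop :=
  exists gs', Ba q gs' /\ gs = map (Rmult c) gs'.

Definition lin_comb (gs : list R) (xs : list functional) : functional :=
  fun n => fold_right Rplus 0 (map (fun gx => fst gx * snd gx n) (combine gs xs)).

(** block sequence: supp x_i < supp x_j for i < j (empty supports impose nothing) *)
Definition block (xs : list functional) : Prop :=
  forall i j a b, (i < j < length xs)%nat ->
    nth i xs (fun _ => 0) a <> 0 -> nth j xs (fun _ => 0) b <> 0 -> (a < b)%nat.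

Inductive MinsList : list functional -> list nat -> Prop :=
| ML_nil : MinsList [] []
| ML_zero : forall x xs L, (forall i, x i = 0) -> MinsList xs L -> MinsList (x :: xs) L
| ML_min : forall x xs L m, x m <> 0 -> (forall i, (i < m)%nat -> x i = 0) ->
    MinsList xs L -> MinsList (x :: xs) (m :: L).

Definition admissible (n : nat) (xs : list functional) : Prop :=
  exists L, MinsList xs L /\ Schreier n L.

Definition norming (Ns : functional -> Prop) : Prop :=
  (forall x, Ns x -> fin_supp x) /\
  (forall n, (1 <= n)%nat -> Ns (ecoord n)) /\
  (forall x n, Ns x -> Rabs (x n) <= 1) /\
  (forall x, Ns x -> Ns (fun i => - x i)) /\
  (forall x a b, Ns x -> Ns (restrict a b x)).

Definition Nk (q : R) (M Nn : nat -> nat) (Ns : functional -> Prop) (k : nat)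
  (y : functional) : Prop :=
  exists (gs : list R) (xs : list functional),
    (1 <= length xs)%nat /\ length gs = length xs /\ Ba q gs /\
    Forall Ns xs /\ block xs /\ admissible (Nn (2 * k)%nat) xs /\
    y = (fun i => / INR (M (2 * k)%nat) * lin_comb gs xs i).

Definition Ninf (p q : R) (M Nn : nat -> nat) (Ns : functional -> Prop)
  (y : functional) : Prop :=
  exists (k : nat) (gs : list R) (xs : list functional) (js : list nat) (a b : nat),
    (1 <= length xs)%nat /\ length gs = length xs /\ length js = length xs /\
    cBa (Rpower 2 (/ p)) q gs /\
    block xs /\ admissible (Nn (2 * k + 1)%nat) xs /\
    NoDup js /\
    Forall2 (fun j x => (1 <= j)%nat /\ Nk q M Nn Ns j x) js xs /\
    y = (fun i => / INR (M (2 * k + 1)%nat) * lin_comb gs (map (restrict a b) xs) i).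

Definition MNq_Schreier (p q : R) (M Nn : nat -> nat) (Ns : functional -> Prop) : Prop :=
  norming Ns /\
  (forall j y, (1 <= j)%nat -> Nk q M Nn Ns j y -> Ns y) /\
  (forall y, Ns y ->
     (exists j, (1 <= j)%nat /\ Nk q M Nn Ns j y) \/
     Ninf p q M Nn Ns y \/
     (exists n, (1 <= n)%nat /\ (y = ecoord n \/ y = (fun i => - ecoord n i)))).

Definition fj_cond (M : nat -> nat) (j rho : nat) (rhos : nat -> nat) : Prop :=
  (M 1%nat ^ rho * nprod 1 (j - 1) (fun i => M (2 * i)%nat ^ rhos i) < M (2 * j)%nat)%nat.
Definition fj_val (Nn : nat -> nat) (j rho : nat) (rhos : nat -> nat) : nat :=
  (rho * Nn 1%nat + nsum 1 (j - 1) (fun i => rhos i * Nn (2 * i)%nat))%nat.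

Definition is_fj (M Nn : nat -> nat) (j f : nat) : Prop :=
  (exists rho rhos, fj_cond M j rho rhos /\ f = fj_val Nn j rho rhos) /\
  (forall rho rhos, fj_cond M j rho rhos -> (fj_val Nn j rho rhos <= f)%nat).

(** standing conditions (i), (ii) on M = (m_i), N = (n_i), indexed from 1 *)
Definition MN_cond (M Nn : nat -> nat) : Prop :=
  (forall i, (1 <= i)%nat -> (0 < M i)%nat /\ (M i < M (i + 1))%nat) /\
  (forall i, (1 <= i)%nat -> (0 < Nn i)%nat /\ (Nn i < Nn (i + 1))%nat) /\
  (3 < M 1%nat)%nat /\ M 2%nat = (M 1%nat ^ 5)%nat /\
  (forall j, (1 <= j)%nat -> M (2 * j + 1)%nat = (M (2 * j)%nat ^ 5)%nat) /\
  (exists s : nat -> nat,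
     (forall i, (1 <= i)%nat -> (0 < s i)%nat /\ (s i < s (i + 1))%nat) /\
     (forall j, (2 <= j)%nat ->
        M (2 * j)%nat = nprod 1 (j - 1) (fun i => M (2 * i)%nat ^ s i)%nat)) /\
  (forall j, (2 <= j)%nat -> exists f, is_fj M Nn j f /\ (4 * f < Nn (2 * j)%nat)%nat) /\
  (5 * Nn 1%nat < Nn 2%nat)%nat.

(* Main.v *)
Require Import Defs.
From Stdlib Require Import Reals Lra Lia List Sorted Arith Classical FunctionalExtensionality.
Import ListNotations.
Open Scope R_scope.

Inductive subl {A : Type} : list A -> list A -> Prop :=
| sl_nil : subl [] []
| sl_skip : forall a l l', subl l' l -> subl l' (a :: l)
| sl_keep : forall a l l', subl l' l -> subl (a :: l') (a :: l).

Lemma subl_nil_l {A} (l : list A) : subl [] l.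
Proof. induction l; [constructor|apply sl_skip; auto]. Qed.

Lemma subl_refl {A} (l : list A) : subl l l.
Proof. induction l; [constructor|apply sl_keep; auto]. Qed.

Lemma subl_Forall {A} (P : A -> Prop) l l' : subl l' l -> Forall P l -> Forall P l'.
Proof. induction 1; intros HF; auto; inversion HF; subst; auto. Qed.

Lemma subl_in {A} l l' (x:A) : subl l' l -> In x l' -> In x l.
Proof. induction 1; simpl; intros; auto. destruct H0; auto. Qed.

Lemma subl_SS l l' : subl l' l -> StronglySorted lt l -> StronglySorted lt l'.
Proof.
  induction 1; intros HS; auto.
  - apply StronglySorted_inv in HS; tauto.
  - apply StronglySorted_inv in HS as [H1 H2]. constructor; auto.
    eapply subl_Forall; eauto.
Qed.

Lemma subl_app_inv {A} (l1 l2 l' : list A) : subl l' (l1 ++ l2) ->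
  exists a b, l' = a ++ b /\ subl a l1 /\ subl b l2.
Proof.
  revert l'; induction l1; intros l' H; simpl in *.
  - exists [], l'; split; [reflexivity|split; [constructor|exact H]].
  - inversion H; subst.
    + destruct (IHl1 _ H2) as [x [y [-> [? ?]]]]. exists x, y; split; [reflexivity|split; [apply sl_skip; auto|auto]].
    + destruct (IHl1 _ H2) as [x [y [-> [? ?]]]]. exists (a :: x), y; split; [reflexivity|split; [apply sl_keep; auto|auto]].
Qed.

Lemma subl_concat_inv {A} (Fs : list (list A)) l' : subl l' (concat Fs) ->
  exists Fs', Forall2 (fun F' F => subl F' F) Fs' Fs /\ concat Fs' = l'.
Proof.
  revert l'; induction Fs; intros l' H; simpl in *.
  - inversion H; subst. exists []; split; auto.
  - apply subl_app_inv in H as [x [y [-> [H1 H2]]]].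
    destruct (IHFs _ H2) as [Fs' [? ?]]. exists (x :: Fs'); split; auto. simpl; congruence.
Qed.

Lemma Forall_concat' {A} (P : A -> Prop) l : Forall (Forall P) l -> Forall P (concat l).
Proof. induction 1; simpl; auto. apply Forall_app; auto. Qed.

Lemma Schreier_ge1 n L : Schreier n L -> Forall (le 1) L.
Proof.
  revert L; induction n; intros L H; simpl in H.
  - destruct H as [->|[a [Ha ->]]]; auto.
  - destruct H as [->|[_ [Fs [HF [Hc _]]]]]; auto. subst.
    apply Forall_concat'. eapply Forall_impl; [|exact HF]. intros F [_ HF']; auto.
Qed.

Definition nonnil {A} (l : list A) : bool := match l with [] => false | _ => true end.

Lemma concat_filter_nonnil {A} (Fs : list (list A)) : concat (filter nonnil Fs) = concat Fs.
Proof. induction Fs as [|[|x F] Fs]; simpl; auto; congruence. Qed.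

Lemma ltTrans : Relations_1.Transitive lt.
Proof. intros x y z; lia. Qed.

Lemma Schreier_sub n : forall L L', Schreier n L -> subl L' L -> Schreier n L'.
Proof.
  induction n; intros L L' H Hs; simpl in *.
  - destruct H as [->|[a [Ha ->]]].
    + inversion Hs; auto.
    + inversion Hs; subst.
      * inversion H1; auto.
      * inversion H1; subst. right; exists a; auto.
  - destruct L' as [|b L'']; [left; auto|]. right.
    destruct H as [->|[HS [Fs [HF [Hc Hl]]]]].
    { inversion Hs. }
    assert (HSS : StronglySorted lt L) by (apply Sorted_StronglySorted; auto; apply ltTrans).
    split. { apply StronglySorted_Sorted. eapply subl_SS; eauto. }
    rewrite <- Hc in Hs.
    destruct (subl_concat_inv _ _ Hs) as [Fs' [H2 Hc']].
    exists (filter nonnil Fs'). split; [|split].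
    + clear -H2 HF IHn. induction H2; simpl; auto.
      inversion HF; subst. destruct x as [|u x]; simpl; auto.
      constructor; auto. split; [congruence|]. destruct H3. eapply IHn; eauto.
    + rewrite concat_filter_nonnil; auto.
    + assert (length (filter nonnil Fs') <= length Fs)%nat.
      { rewrite <- (Forall2_length H2). apply filter_length_le. }
      assert (hd 0%nat L <= b)%nat.
      { assert (In b L). { rewrite <- Hc. eapply subl_in; eauto. simpl; auto. }
        destruct L as [|c L0]; simpl; [lia|]. destruct H0 as [->|H0]; [lia|].
        apply StronglySorted_inv in HSS as [_ HSS]. rewrite Forall_forall in HSS.
        specialize (HSS _ H0). lia. }
      simpl. lia.
Qed.
Lemma SS_app_r {A} (R : A -> A -> Prop) l1 l2 : StronglySorted R (l1 ++ l2) -> StronglySorted R l2.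
Proof. induction l1; simpl; auto. intros H; apply StronglySorted_inv in H; tauto. Qed.

Lemma hd_sorted Gs : Forall (fun G : list nat => G <> []) Gs ->
  StronglySorted lt (concat Gs) -> StronglySorted lt (map (hd 0%nat) Gs).
Proof.
  induction 1 as [|G Gs HG HGs IH]; simpl; intros HS; [constructor|].
  destruct G as [|a G']; [congruence|]. simpl in *.
  apply StronglySorted_inv in HS as [HS1 HS2].
  constructor.
  - apply IH. eapply SS_app_r; eauto.
  - rewrite Forall_forall in *. intros y Hy. apply in_map_iff in Hy as [G'' [<- HG'']].
    apply HS2. apply in_or_app; right. apply in_concat. exists G''; split; auto.
    destruct G'' as [|u G'']; [ | simpl; auto].
    specialize (HGs _ HG''). congruence.
Qed.

Lemma hd_concat Gs : Forall (fun G : list nat => G <> []) Gs ->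
  hd 0%nat (map (hd 0%nat) Gs) = hd 0%nat (concat Gs).
Proof. destruct 1; simpl; auto. destruct x; simpl; congruence. Qed.

Lemma decomp n m : forall L, Schreier (m + n) L -> exists Gs,
  Forall (fun G => G <> [] /\ Schreier n G) Gs /\ concat Gs = L /\
  Schreier m (map (hd 0%nat) Gs).
Proof.
  induction m; intros L H.
  - simpl in H. destruct L as [|a L0].
    + exists []; simpl; split; auto.
    + exists [a :: L0]; simpl; split; [|split].
      * constructor; auto. split; congruence.
      * rewrite app_nil_r; auto.
      * right; exists a; split; auto. apply Schreier_ge1 in H. inversion H; auto.
  - simpl in H. destruct H as [->|[HS [Fs [HF [Hc Hl]]]]].
    { exists []; simpl; split; auto. }
    assert (exists Gss, Forall2 (fun Gs F => Forall (fun G => G <> [] /\ Schreier n G) Gs /\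
       concat Gs = F /\ Schreier m (map (hd 0%nat) Gs) /\ Gs <> []) Gss Fs) as [Gss HG].
    { clear Hc Hl. induction HF as [|F Fs [HF1 HF2] HFs IH].
      - exists []; constructor.
      - destruct IH as [Gss IH]. destruct (IHm _ HF2) as [Gs [? [? ?]]].
        exists (Gs :: Gss); constructor; auto. repeat split; auto.
        intros ->; simpl in *; congruence. }
    assert (Hcc : concat (concat Gss) = L).
    { rewrite <- Hc. clear -HG. induction HG as [|Gs F Gss Fs [_ [H _]] _ IH]; simpl; auto.
      rewrite concat_app; congruence. }
    assert (HFa : Forall (fun G => G <> [] /\ Schreier n G) (concat Gss)).
    { apply Forall_concat'. clear -HG. induction HG as [|? ? ? ? HH]; constructor; [apply HH|auto]. }
    assert (HFn : Forall (fun G : list nat => G <> []) (concat Gss)).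
    { eapply Forall_impl; [|exact HFa]. intros ? [? ?]; auto. }
    exists (concat Gss); split; [auto|split; [auto|]].
    simpl. right. split.
    + apply StronglySorted_Sorted. apply hd_sorted; auto. rewrite Hcc.
      apply Sorted_StronglySorted; auto. apply ltTrans.
    + exists (map (map (hd 0%nat)) Gss). split; [|split].
      * clear -HG. induction HG as [|Gs F Gss Fs [_ [_ [H1 H2]]] _ IH]; simpl; constructor; auto.
        split; auto. destruct Gs; simpl; congruence.
      * rewrite concat_map; auto.
      * rewrite length_map, (Forall2_length HG), hd_concat, Hcc; auto.
Qed.
Definition before (x y : functional) : Prop :=
  forall a b, x a <> 0 -> y b <> 0 -> (a < b)%nat.
Definition ismin (x : functional) (m : nat) : Prop :=
  x m <> 0 /\ forall i, (i < m)%nat -> x i = 0.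
Definition sumpow (q : R) (bs : list R) : R := fold_right Rplus 0 (map (powabs q) bs).

Lemma block_FOP xs : block xs -> ForallOrdPairs before xs.
Proof.
  induction xs as [|x xs IH]; intros Hb; constructor.
  - apply Forall_forall. intros y Hy. destruct (In_nth _ _ (fun _ => 0) Hy) as [j [Hj Hn]].
    intros a b Ha Hb'. apply (Hb 0%nat (S j) a b); simpl; auto; [split; [apply Nat.lt_0_succ|apply (proj1 (Nat.succ_lt_mono _ _)); exact Hj]|intro E; apply Hb'; rewrite <- Hn; exact E].
  - apply IH. intros i j a b Hij Ha Hb'. apply (Hb (S i) (S j) a b); simpl; auto. lia.
Qed.

Lemma FOP_block xs : ForallOrdPairs before xs -> block xs.
Proof.
  induction 1 as [|x xs HF HO IH]; intros i j a b Hij Ha Hb; simpl in *; [lia|].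
  destruct i, j; try lia.
  - rewrite Forall_forall in HF. apply (HF (nth j xs (fun _ => 0))); auto.
    apply nth_In; lia.
  - apply (IH i j a b); auto; lia.
Qed.

Lemma FOP_app_l {A} (R : A -> A -> Prop) l1 l2 : ForallOrdPairs R (l1 ++ l2) -> ForallOrdPairs R l1.
Proof.
  induction l1; simpl; intros H; [constructor|]. inversion H; subst. constructor; auto.
  apply Forall_forall; intros y Hy. rewrite Forall_forall in H2. apply H2, in_or_app; auto.
Qed.

Lemma FOP_app_r {A} (R : A -> A -> Prop) l1 l2 : ForallOrdPairs R (l1 ++ l2) -> ForallOrdPairs R l2.
Proof. induction l1; simpl; intros H; auto. inversion H; auto. Qed.

Lemma FOP_cross {A} (R : A -> A -> Prop) l1 l2 x y : ForallOrdPairs R (l1 ++ l2) ->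
  In x l1 -> In y l2 -> R x y.
Proof.
  induction l1; simpl; intros H Hx Hy; [tauto|]. inversion H; subst.
  destruct Hx as [->|Hx]; auto. rewrite Forall_forall in H2. apply H2, in_or_app; auto.
Qed.

Lemma FOP_subl {A} (R : A -> A -> Prop) l l' : subl l' l -> ForallOrdPairs R l -> ForallOrdPairs R l'.
Proof.
  induction 1 as [|a l l' Hs IH|a l l' Hs IH]; intros HH; auto; inversion HH; subst; auto.
  constructor; auto. eapply subl_Forall; eauto.
Qed.

Lemma F2_Mins xs L : Forall2 ismin xs L -> MinsList xs L.
Proof. induction 1 as [|x m xs L [H1 H2]]; [constructor|apply ML_min; auto]. Qed.

Lemma lin_comb_nil_r bs n : lin_comb bs [] n = 0.
Proof. destruct bs; reflexivity. Qed.

Lemma lin_comb_cons b bs x xs n : lin_comb (b :: bs) (x :: xs) n = b * x n + lin_comb bs xs n.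
Proof. reflexivity. Qed.

Lemma lin_comb_app bs1 bs2 xs1 xs2 n : length bs1 = length xs1 ->
  lin_comb (bs1 ++ bs2) (xs1 ++ xs2) n = lin_comb bs1 xs1 n + lin_comb bs2 xs2 n.
Proof.
  revert xs1; induction bs1; intros [|x xs1] H; simpl in *; try lia.
  - unfold lin_comb at 2; simpl; ring.
  - rewrite !lin_comb_cons, IHbs1; [ring|lia].
Qed.

Lemma lin_comb_scale c bs xs n :
  lin_comb (map (fun b => b * c) bs) xs n = c * lin_comb bs xs n.
Proof.
  revert xs; induction bs; intros [|x xs]; simpl; try (unfold lin_comb; simpl; ring).
  rewrite !lin_comb_cons, IHbs. ring.
Qed.

Lemma lin_comb_supp bs xs n : lin_comb bs xs n <> 0 -> exists x, In x xs /\ x n <> 0.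
Proof.
  revert xs; induction bs; intros [|x xs] H; try (unfold lin_comb in H; simpl in H; lra).
  rewrite lin_comb_cons in H. destruct (Req_EM_T (x n) 0).
  - destruct (IHbs xs) as [y [? ?]]; [rewrite e in H; lra|]. exists y; simpl; auto.
  - exists x; simpl; auto.
Qed.

Lemma lin_comb_zero bs xs n : (forall x, In x xs -> x n = 0) -> lin_comb bs xs n = 0.
Proof.
  intros H. destruct (Req_EM_T (lin_comb bs xs n) 0); auto.
  destruct (lin_comb_supp _ _ _ n0) as [x [? ?]]. exfalso; apply H1; auto.
Qed.

Lemma Rpower_pos' x y : 0 < Rpower x y.
Proof. unfold Rpower; apply exp_pos. Qed.

Lemma powabs_nonneg q b : 0 <= powabs q b.
Proof. unfold powabs; destruct (Req_EM_T b 0); [lra|]. left; apply Rpower_pos'. Qed.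

Lemma powabs_pos q b : b <> 0 -> 0 < powabs q b.
Proof. unfold powabs; destruct (Req_EM_T b 0); [tauto|]. intros; apply Rpower_pos'. Qed.

Lemma sumpow_nonneg q bs : 0 <= sumpow q bs.
Proof. induction bs; unfold sumpow in *; simpl; [lra|]. pose proof (powabs_nonneg q a); lra. Qed.

Lemma sumpow_cons q b bs : sumpow q (b :: bs) = powabs q b + sumpow q bs.
Proof. reflexivity. Qed.

Lemma sumpow_app q l1 l2 : sumpow q (l1 ++ l2) = sumpow q l1 + sumpow q l2.
Proof. induction l1; simpl; [unfold sumpow; simpl; ring|]. rewrite !sumpow_cons, IHl1; ring. Qed.

Lemma Rpower_1_base y : Rpower 1 y = 1.
Proof. unfold Rpower. rewrite ln_1, Rmult_0_r, exp_0; auto. Qed.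

Lemma Rpower_inv_base x y : 0 < x -> Rpower (/ x) y = / Rpower x y.
Proof.
  intros Hx. pose proof (Rpower_pos' x y).
  assert (Rpower (/ x) y * Rpower x y = 1).
  { rewrite Rpower_mult_distr; [|apply Rinv_0_lt_compat; auto|auto].
    rewrite Rinv_l; [apply Rpower_1_base|lra]. }
  apply (Rmult_eq_reg_r (Rpower x y)); [|lra]. rewrite H0, Rinv_l; lra.
Qed.

Lemma sumpow_scale q c bs : 0 < c ->
  sumpow q (map (fun b => b * c) bs) = Rpower c q * sumpow q bs.
Proof.
  intros Hc. induction bs; simpl; [unfold sumpow; simpl; ring|].
  rewrite !sumpow_cons, IHbs. unfold powabs.
  destruct (Req_EM_T a 0), (Req_EM_T (a * c) 0).
  - ring.
  - subst; exfalso; apply n; ring.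
  - exfalso. apply Rmult_integral in e as [|]; [tauto|lra].
  - rewrite Rabs_mult, (Rabs_right c) by lra.
    rewrite <- Rpower_mult_distr; [ring| |lra]. apply Rabs_pos_lt; auto.
Qed.
Lemma prune q : forall xs betas L, MinsList xs L -> length betas = length xs ->
  exists betas' xs' L', Forall (fun b => b <> 0) betas' /\ Forall2 ismin xs' L' /\
    subl L' L /\ subl xs' xs /\ length betas' = length xs' /\
    sumpow q betas' <= sumpow q betas /\
    forall n, lin_comb betas' xs' n = lin_comb betas xs n.
Proof.
  induction xs as [|x xs IH]; intros [|b bs] L HM Hl; simpl in Hl; try lia.
  - inversion HM; subst. exists [], [], [].
    repeat split; auto; try apply Rle_refl; constructor.
  - pose proof (powabs_nonneg q b) as Hpb.
    inversion HM as [|x0 xs0 L0 Hz HM'|x0 xs0 L0 m Hm Hlt HM']; subst.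
    + destruct (IH bs L HM' ltac:(lia)) as [b' [x' [L' [H1 [H2 [H3 [H4 [H5 [H6 H7]]]]]]]]].
      exists b', x', L'. repeat split; auto.
      * apply sl_skip; auto.
      * rewrite sumpow_cons; lra.
      * intros n; rewrite lin_comb_cons, Hz, H7; ring.
    + destruct (IH bs L0 HM' ltac:(lia)) as [b' [x' [L' [H1 [H2 [H3 [H4 [H5 [H6 H7]]]]]]]]].
      destruct (Req_EM_T b 0) as [Hb0|Hb0].
      * exists b', x', L'. repeat split; auto.
        -- apply sl_skip; auto.
        -- apply sl_skip; auto.
        -- rewrite sumpow_cons; lra.
        -- intros n; rewrite lin_comb_cons, Hb0, H7; ring.
      * exists (b :: b'), (x :: x'), (m :: L'). repeat split; auto.
        -- constructor; auto. split; auto.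
        -- apply sl_keep; auto.
        -- apply sl_keep; auto.
        -- simpl; lia.
        -- rewrite !sumpow_cons; lra.
        -- intros n; rewrite !lin_comb_cons, H7; ring.
Qed.

Lemma split_F2 {A B} (R : A -> B -> Prop) : forall Gs xs, Forall2 R xs (concat Gs) ->
  exists xss, xs = concat xss /\ Forall2 (Forall2 R) xss Gs.
Proof.
  induction Gs as [|G Gs IH]; intros xs H; simpl in H.
  - inversion H; subst. exists []; split; auto.
  - apply Forall2_app_inv_r in H as [l1 [l2 [H1 [H2 ->]]]].
    destruct (IH _ H2) as [xss [-> ?]]. exists (l1 :: xss); split; auto.
Qed.

Lemma split_len {A B} : forall (xss : list (list B)) (bs : list A), length bs = length (concat xss) ->
  exists bss, bs = concat bss /\ Forall2 (fun b x => length b = length x) bss xss.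
Proof.
  induction xss as [|xs xss IH]; intros bs H; simpl in H.
  - destruct bs; simpl in H; try lia. exists []; split; auto.
  - rewrite length_app in H.
    destruct (IH (skipn (length xs) bs)) as [bss [Hb HF]].
    { rewrite length_skipn; lia. }
    exists (firstn (length xs) bs :: bss); split.
    + simpl; rewrite <- Hb, firstn_skipn; auto.
    + constructor; auto. rewrite length_firstn; lia.
Qed.

Definition PP (q : R) (Ns : functional -> Prop) (D Pr : nat) : Prop :=
  forall betas xs, Forall Ns xs -> block xs -> admissible D xs ->
    length betas = length xs -> Ba q betas ->
    Ns (fun i => / INR Pr * lin_comb betas xs i).
Lemma concat_cons' {A} (l : list A) ls : concat (l :: ls) = l ++ concat ls.
Proof. reflexivity. Qed.

Lemma chunk q Ns D Pr (Hq : 0 < q) (HP : PP q Ns D Pr) (HPr : INR Pr <> 0) :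
 forall Gs bss xss,
  Forall2 (fun bs xs => length bs = length xs) bss xss ->
  Forall2 (Forall2 ismin) xss Gs ->
  Forall (fun G => G <> [] /\ Schreier D G) Gs ->
  Forall (fun b => b <> 0) (concat bss) ->
  Forall Ns (concat xss) ->
  ForallOrdPairs before (concat xss) ->
  exists gs ys, length gs = length ys /\ sumpow q gs = sumpow q (concat bss) /\
   Forall Ns ys /\ Forall2 ismin ys (map (hd 0%nat) Gs) /\ ForallOrdPairs before ys /\
   (forall n y, In y ys -> y n <> 0 -> exists x, In x (concat xss) /\ x n <> 0) /\
   forall n, lin_comb gs ys n = / INR Pr * lin_comb (concat bss) (concat xss) n.
Proof.
  induction Gs as [|G Gs IH]; intros bss xss Hl Hm HG Hb HN HO.
  - inversion Hm; subst. inversion Hl; subst.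
    exists [], []; split; [reflexivity|split; [reflexivity|split; [constructor|split;[constructor|split;[constructor|split]]]]].
    + intros n y [].
    + intros n; unfold lin_comb; simpl; ring.
  - inversion Hm as [|xs_c G0 xss' Gs0 Hmc Hm']; subst.
    inversion Hl as [|bs xs0 bss' xss0 Hlc Hl']; subst.
    inversion HG as [|G1 Gs1 [HGne HGs] HG']; subst.
    rewrite concat_cons' in Hb. rewrite concat_cons' in HN. rewrite concat_cons' in HO.
    apply Forall_app in Hb as [Hb1 Hb2]. apply Forall_app in HN as [HN1 HN2].
    pose proof (FOP_app_l _ _ _ HO) as HO1. pose proof (FOP_app_r _ _ _ HO) as HO2.
    destruct (IH bss' xss' Hl' Hm' HG' Hb2 HN2 HO2) as [gs [ys [I1 [I2 [I3 [I4 [I5 [I6 I7]]]]]]]].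
    destruct G as [|m G']; [congruence|].
    inversion Hmc as [|x1 m0 rest G0 Hx1 Hrest]; subst.
    destruct bs as [|b1 bs']; [simpl in Hlc; lia|].
    pose proof (Forall_inv Hb1) as Hb1'. simpl in Hb1'.
    set (S := sumpow q (b1 :: bs')).
    assert (HS : 0 < S).
    { unfold S; rewrite sumpow_cons; pose proof (powabs_pos q b1 Hb1'); pose proof (sumpow_nonneg q bs'); lra. }
    set (g := Rpower S (/ q)).
    assert (Hg : 0 < g) by apply Rpower_pos'.
    assert (HgS : Rpower g q = S).
    { unfold g; rewrite Rpower_mult, Rinv_l, Rpower_1; lra. }
    set (bsn := map (fun b => b * / g) (b1 :: bs')).
    set (y := fun i => / INR Pr * lin_comb bsn (x1 :: rest) i).
    assert (Hy : Ns y).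
    { apply HP; auto.
      - apply FOP_block; auto.
      - exists (m :: G'); split; auto. apply F2_Mins; auto.
      - unfold bsn; rewrite length_map; auto.
      - unfold Ba. change (sumpow q bsn <= 1). unfold bsn.
        rewrite sumpow_scale by (apply Rinv_0_lt_compat; auto).
        rewrite Rpower_inv_base, HgS by auto. fold S. rewrite Rinv_l; lra. }
    assert (Hyz : forall n, y n <> 0 -> exists x, In x (x1 :: rest) /\ x n <> 0).
    { intros n Hn. apply (lin_comb_supp bsn). intros E; apply Hn; unfold y; rewrite E; ring. }
    assert (Hrz : forall i, (i <= m)%nat -> forall x, In x rest -> x i = 0).
    { intros i Hi x Hx. destruct (Req_EM_T (x i) 0) as [|Hn]; auto. exfalso.
      inversion HO1 as [|? ? HF1 _]; subst. rewrite Forall_forall in HF1.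
      specialize (HF1 x Hx m i (proj1 Hx1) Hn). lia. }
    exists (g :: gs), (y :: ys).
    split; [simpl; lia|].
    split.
    { rewrite sumpow_cons, I2, concat_cons', sumpow_app. f_equal.
      unfold powabs. destruct Req_EM_T; [lra|]. rewrite Rabs_right by lra. rewrite HgS. reflexivity. }
    split; [constructor; auto|].
    split.
    { simpl map. constructor; auto. split.
      - unfold y, bsn; simpl map. rewrite lin_comb_cons, (lin_comb_zero _ rest m)
          by (intros; apply Hrz; auto).
        rewrite Rplus_0_r.
        apply Rmult_integral_contrapositive_currified; [apply Rinv_neq_0_compat; auto|].
        apply Rmult_integral_contrapositive_currified; [|exact (proj1 Hx1)].
        apply Rmult_integral_contrapositive_currified; [exact Hb1'|apply Rinv_neq_0_compat; lra].
      - intros i Hi. unfold y. rewrite lin_comb_zero; [ring|].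
        intros x [<-|Hx]; [apply (proj2 Hx1); auto|apply Hrz; auto; lia]. }
    split.
    { constructor; auto. apply Forall_forall; intros y' Hy' a b Ha Hb.
      destruct (Hyz a Ha) as [x [Hx Hxa]]. destruct (I6 b y' Hy' Hb) as [x' [Hx' Hx'b]].
      apply (FOP_cross _ _ _ x x' HO Hx Hx' a b Hxa Hx'b). }
    split.
    { intros n y0 [<-|Hy0] Hn.
      - destruct (Hyz n Hn) as [x [? ?]]; exists x; split; auto; rewrite concat_cons'; apply in_or_app; auto.
      - destruct (I6 n y0 Hy0 Hn) as [x [? ?]]; exists x; split; auto; rewrite concat_cons'; apply in_or_app; auto. }
    intros n. rewrite lin_comb_cons, I7, !concat_cons', lin_comb_app by auto.
    unfold y, bsn. rewrite lin_comb_scale. field. split; lra.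
Qed.
Lemma Ns_ext (Ns : functional -> Prop) f g : Ns f -> (forall i, f i = g i) -> Ns g.
Proof. intros H E. replace g with f; auto. apply functional_extensionality; auto. Qed.

Lemma Ns_zero Ns : norming Ns -> Ns (fun _ => 0).
Proof.
  intros [_ [He [_ [_ Hr]]]].
  apply (Ns_ext _ (restrict 2 1 (ecoord 1))). { apply Hr, He; lia. }
  intros i; unfold restrict.
  destruct (Nat.leb_spec 2 i), (Nat.leb_spec i 1); simpl; auto; exfalso; lia.
Qed.

Lemma npow_pos m c : (0 < m)%nat -> (0 < m ^ c)%nat.
Proof. intros H; induction c; simpl; [lia|]. apply Nat.mul_pos_pos; auto. Qed.

Lemma base p q M Nn Ns j : MNq_Schreier p q M Nn Ns -> (1 <= j)%nat ->
  PP q Ns (Nn (2*j)%nat) (M (2*j)%nat).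
Proof.
  intros [Hn [HNk _]] Hj betas xs HF Hb Ha Hl HB.
  destruct xs as [|x xs'].
  - destruct betas; simpl in Hl; try lia.
    eapply Ns_ext; [apply (Ns_zero _ Hn)|]. intros i; simpl. unfold lin_comb; simpl; ring.
  - apply (HNk j); auto. exists betas, (x :: xs').
    refine (conj _ (conj Hl (conj HB (conj HF (conj Hb (conj Ha eq_refl)))))); simpl; lia.
Qed.

Lemma step p q M Nn Ns j D Pr : 0 < q -> MNq_Schreier p q M Nn Ns -> (1 <= j)%nat ->
  (0 < Pr)%nat -> PP q Ns D Pr -> PP q Ns (Nn (2*j)%nat + D) (M (2*j)%nat * Pr).
Proof.
  intros Hq [Hn [HNk _]] Hj HPr HP betas xs HF Hb [L [HML HS]] Hl HB.
  assert (HPr' : INR Pr <> 0) by (apply not_0_INR; lia).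
  destruct (prune q xs betas L HML Hl) as [b' [x' [L' [P1 [P2 [P3 [P4 [P5 [P6 P7]]]]]]]]].
  assert (HS' : Schreier (Nn (2*j)%nat + D) L') by (eapply Schreier_sub; eauto).
  apply (Ns_ext _ (fun i => / INR (M (2*j)%nat) * (/ INR Pr * lin_comb b' x' i))).
  2: { intros i. rewrite P7, mult_INR, Rinv_mult. ring. }
  destruct (decomp D (Nn (2*j)%nat) L' HS') as [Gs [G1 [G2 G3]]].
  destruct Gs as [|G0 Gs0].
  - simpl in G2. subst L'. inversion P2; subst.
    eapply Ns_ext; [apply (Ns_zero _ Hn)|]. intros i; simpl. rewrite lin_comb_nil_r; ring.
  - assert (HN' : Forall Ns x') by (eapply subl_Forall; eauto).
    assert (HO' : ForallOrdPairs before x') by (eapply FOP_subl; eauto; apply block_FOP; auto).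
    rewrite <- G2 in P2. destruct (split_F2 _ _ _ P2) as [xss [Ex Hxss]].
    rewrite Ex in P5. destruct (split_len xss b' P5) as [bss [Eb Hbss]].
    subst x' b'.
    destruct (chunk q Ns D Pr Hq HP HPr' _ bss xss Hbss Hxss G1 P1 HN' HO')
      as [gs [ys [C1 [C2 [C3 [C4 [C5 [C6 C7]]]]]]]].
    apply (Ns_ext _ (fun i => / INR (M (2*j)%nat) * lin_comb gs ys i)).
    2: { intros i; rewrite C7; reflexivity. }
    apply (HNk j); auto. exists gs, ys.
    split. { rewrite (Forall2_length C4). simpl; lia. }
    split; [auto|].
    split. { unfold Ba. change (sumpow q gs <= 1). rewrite C2.
             unfold Ba in HB. change (sumpow q betas <= 1) in HB. lra. }
    split; [auto|]. split; [apply FOP_block; auto|].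
    split; [|reflexivity]. exists (map (hd 0%nat) (G0 :: Gs0)); split; auto. apply F2_Mins; auto.
Qed.

Lemma iter p q M Nn Ns j D Pr : 0 < q -> MNq_Schreier p q M Nn Ns -> (1 <= j)%nat ->
  (0 < M (2*j)%nat)%nat -> (0 < Pr)%nat -> PP q Ns D Pr ->
  forall c, PP q Ns (c * Nn (2*j)%nat + D) (M (2*j)%nat ^ c * Pr).
Proof.
  intros Hq HNs Hj HM HPr HP c. induction c.
  - replace (0 * Nn (2*j)%nat + D)%nat with D by lia.
    replace (M (2*j)%nat ^ 0 * Pr)%nat with Pr by (simpl; lia). auto.
  - replace (S c * Nn (2*j)%nat + D)%nat with (Nn (2*j)%nat + (c * Nn (2*j)%nat + D))%nat by lia.
    replace (M (2*j)%nat ^ S c * Pr)%nat with (M (2*j)%nat * (M (2*j)%nat ^ c * Pr))%nat by (simpl; ring).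
    apply step with (p := p); auto. apply Nat.mul_pos_pos; auto. apply npow_pos; auto.
Qed.

Lemma nprod_pos (M : nat -> nat) (a : nat -> nat) : (forall i, (1 <= i)%nat -> (0 < M i)%nat) ->
  forall len lo, (1 <= lo)%nat -> (0 < nprod lo len (fun l => M (2*l)%nat ^ a l))%nat.
Proof.
  intros HM; induction len; intros lo Hlo; [unfold nprod; simpl; lia|].
  change (0 < M (2*lo)%nat ^ a lo * nprod (S lo) len (fun l => M (2*l)%nat ^ a l))%nat.
  apply Nat.mul_pos_pos; [apply npow_pos, HM; lia|apply IHlen; lia].
Qed.

Lemma tail_zero (M Nn a : nat -> nat) : forall len lo,
  (forall l, (lo <= l < lo + len)%nat -> a l = 0%nat) ->
  nsum lo len (fun l => a l * Nn (2*l)%nat)%nat = 0%nat /\ nprod lo len (fun l => M (2*l)%nat ^ a l)%nat = 1%nat.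
Proof.
  induction len; intros lo H; [split; reflexivity|].
  destruct (IHlen (S lo)) as [H1 H2]; [intros; apply H; lia|].
  change (a lo * Nn (2*lo)%nat + nsum (S lo) len (fun l => a l * Nn (2*l)%nat) = 0 /\
          M (2*lo)%nat ^ a lo * nprod (S lo) len (fun l => M (2*l)%nat ^ a l) = 1)%nat.
  rewrite H1, H2, (H lo) by lia. simpl; lia.
Qed.

Lemma range p q M Nn Ns a : 0 < q -> MNq_Schreier p q M Nn Ns ->
  (forall i, (1 <= i)%nat -> (0 < M i)%nat) -> forall len lo, (1 <= lo)%nat ->
  (exists l, (lo <= l < lo + len)%nat /\ a l <> 0%nat) ->
  PP q Ns (nsum lo len (fun l => a l * Nn (2*l)%nat))%nat (nprod lo len (fun l => M (2*l)%nat ^ a l))%nat.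
Proof.
  intros Hq HNs HM; induction len; intros lo Hlo [l [Hl Ha]]; [lia|].
  change (PP q Ns (a lo * Nn (2*lo)%nat + nsum (S lo) len (fun l => a l * Nn (2*l)%nat))
                  (M (2*lo)%nat ^ a lo * nprod (S lo) len (fun l => M (2*l)%nat ^ a l)))%nat.
  destruct (classic (exists l, (S lo <= l < S lo + len)%nat /\ a l <> 0%nat)) as [Ht|Ht].
  - apply iter with (p := p); auto.
    all: first [apply IHlen; auto; lia | apply nprod_pos; auto; lia | apply HM; lia].
  - assert (Hz : forall l, (S lo <= l < S lo + len)%nat -> a l = 0%nat).
    { intros l' Hl'. destruct (Nat.eq_dec (a l') 0); auto. exfalso; apply Ht; exists l'; auto. }
    destruct (tail_zero M Nn a len (S lo) Hz) as [-> ->].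
    assert (a lo <> 0%nat).
    { intros E. destruct (Nat.eq_dec l lo); [subst; auto|]. apply Ha, Hz; lia. }
    destruct (a lo) as [|c]; [lia|].
    replace (S c * Nn (2*lo)%nat + 0)%nat with (c * Nn (2*lo)%nat + Nn (2*lo)%nat)%nat by lia.
    replace (M (2*lo)%nat ^ S c * 1)%nat with (M (2*lo)%nat ^ c * M (2*lo)%nat)%nat by (simpl; ring).
    apply iter with (p := p); auto.
    all: first [apply base with (p := p); auto | apply HM; lia].
Qed.

Theorem mainTheorem7 (p q : R) (M Nn : nat -> nat) (Ns : functional -> Prop)
  (k : nat) (a : nat -> nat) (xs : list functional) (betas : list R) :
  1 < p -> 1 < q -> / p + / q = 1 ->
  MN_cond M Nn ->
  MNq_Schreier p q M Nn Ns ->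
  (2 <= k)%nat ->
  (exists l, (1 <= l < k)%nat /\ a l <> 0%nat) ->
  Forall Ns xs ->
  block xs ->
  admissible (nsum 1 (k - 1) (fun l => a l * Nn (2 * l)))%nat xs ->
  length betas = length xs ->
  Ba q betas ->
  Ns (fun i => / INR (nprod 1 (k - 1) (fun l => M (2 * l) ^ a l))%nat
               * lin_comb betas xs i).
Proof.
  intros Hp Hq Hpq HMN HNs Hk [l [Hl Ha]] HF Hb Had Hlen HB.
  apply (range p q M Nn Ns a); auto; try lra.
  - intros i Hi. apply (proj1 HMN i Hi).
  - exists l; split; auto; lia.
Qed.
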